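(* Let $k\geq 1$ be an integer and let $\mathcal{B}$ be a Boolean algebra with $2^{k+1}$ elements, viewed as an MV-algebra $(\mathcal{B},\oplus,\lceil,0)$ with $x\oplus y=x\vee y$ and greatest element $\varepsilon$. Define matrices $M_{2^m}\in\mathcal{M}_{2^m}(\{0,1\})$ recursively by $M_2=\begin{pmatrix}0&1\\1&1\end{pmatrix}$ and $M_{2^{m+1}}=\begin{pmatrix}\mathbf{0}_{2^m}&M_{2^m}\\ M_{2^m}&M_{2^m}\end{pmatrix}$, where $\mathbf{0}_{2^m}$ is the $2^m\times 2^m$ zero matrix, and let $C_{2^{k+1}}$ be the binary block code whose codewords are the rows of $M_{2^{k+1}}$. Then: (1) the elements of $\mathcal{B}$ can be enumerated as $\alpha_0,\alpha_1,\dots,\alpha_{2^{k+1}-1}$ so that the binary block code attached to $\mathcal{B}$ (with respect to this enumeration) has attached matrix equal to $M_{2^{k+1}}$; (2) there is a binary operation $*$ on $C_{2^{k+1}}$ such that $(C_{2^{k+1}},* )$ is a Boolean algebra isomorphic to $\mathcal{B}$ (i.e. there is a bijection $f:C_{2^{k+1}}\to\mathcal{B}$ with $f(w*w')=f(w)\oplus f(w')$ for all codewords $w,w'$).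
   Context: For a finite MV-algebra $X=\{\alpha_0,\alpha_1,\dots,\alpha_{n-1}\}$ of order $n$ with greatest element $\varepsilon=\lceil 0$, the binary block code attached to $X$ consists of $n$ codewords $w_0,\dots,w_{n-1}$ of length $n$, where $w_j=i_0i_1\cdots i_{n-1}$ with $i_s=1$ if $\alpha_j\oplus\alpha_s=\varepsilon$ and $i_s=0$ otherwise. The matrix attached to the code is the $n\times n$ $0/1$ matrix whose $j$-th row is $w_j$. A Boolean algebra is an MV-algebra in which $x\oplus x=x$ for all $x$; in it $x\oplus y=x\vee y$. *)

(* Defs.v *)
From HB Require Import structures.
From mathcomp Require Import all_boot all_order all_algebra.
Set Implicit Arguments. Unset Strict Implicit. Unset Printing Implicit Defensive.
Import Order.TTheory.
Local Open Scope order_scope.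

(* A Boolean algebra is modelled as a finite complemented distributive lattice
   (finCTBDistrLatticeType); viewed as an MV-algebra:
   x (+) y := x `|` y, lceil x := ~` x, 0 := \bot, epsilon := \top. *)

Definition mv_oplus d (B : finCTBDistrLatticeType d) (x y : B) : B := x `|` y.
Definition mv_eps d (B : finCTBDistrLatticeType d) : B := \top.

Definition code_matrix d (B : finCTBDistrLatticeType d) n (alpha : 'I_n -> B)
  : 'M[bool]_n :=
  \matrix_(j < n, s < n) (mv_oplus (alpha j) (alpha s) == mv_eps B).

(* Entries of M_{2^(m+1)}: block recursion
   M_2 = [[0,1],[1,1]],  M_{2^(m+2)} = [[0, M],[M, M]] with blocks of size 2^(m+1). *)
Fixpoint Mentry (m : nat) (i j : nat) : bool :=
  match m with
  | 0 => (i == 1)%N || (j == 1)%N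
  | m'.+1 =>
      let h := (2 ^ m'.+1)%N in
      if (i < h)%N then
        (if (j < h)%N then false else Mentry m' i (j - h))
      else
        (if (j < h)%N then Mentry m' (i - h) j else Mentry m' (i - h) (j - h))
  end.

Definition Mmat (m : nat) : 'M[bool]_(2 ^ m.+1) :=
  \matrix_(i < 2 ^ m.+1, j < 2 ^ m.+1) Mentry m i j.

Definition is_codeword (m : nat) (w : 'rV[bool]_(2 ^ m.+1)) : bool :=
  [exists i : 'I_(2 ^ m.+1), w == row i (Mmat m)].

Definition code (m : nat) := {w : 'rV[bool]_(2 ^ m.+1) | @is_codeword m w}.

(* Main.v *)
Require Import Defs.
From HB Require Import structures.
From mathcomp Require Import all_boot all_order all_algebra.
Set Implicit Arguments. Unset Strict Implicit.

Definition bit (x l : nat) : bool := odd (x %/ 2 ^ l).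
Definition cov (n x y : nat) : bool := all (fun l => bit x l || bit y l) (iota 0 n).

Lemma bit_hi x m : (x < 2 ^ m.+1)%N -> bit x m.+1 = false.
Proof. by move=> h; rewrite /bit divn_small. Qed.

Lemma bit_hi2 x m : (x < 2 ^ m.+1)%N -> bit (2 ^ m.+1 + x) m.+1 = true.
Proof. by move=> h; rewrite /bit divnDl // divnn expn_gt0 /= (divn_small h). Qed.

Lemma bit_lo x m l : (l <= m)%N -> bit (2 ^ m.+1 + x) l = bit x l.
Proof.
move=> hl; rewrite /bit divnDl ?dvdn_exp2l ?(leq_trans hl) //.
rewrite -expnB // ?(leq_trans hl) // oddD oddX.
by rewrite subn_eq0 ltnNge (leq_trans hl) //.
Qed.

Lemma cov_lo m x y : cov m.+1 (2 ^ m.+1 + x) y = cov m.+1 x y.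
Proof.
apply: eq_in_all => l; rewrite mem_iota add0n ltnS => hl.
by rewrite bit_lo.
Qed.

Lemma cov_lo' m x y : cov m.+1 x (2 ^ m.+1 + y) = cov m.+1 x y.
Proof.
apply: eq_in_all => l; rewrite mem_iota add0n ltnS => hl.
by rewrite bit_lo.
Qed.

Lemma covS n x y : cov n.+1 x y = cov n x y && (bit x n || bit y n).
Proof. by rewrite /cov -addn1 iotaD all_cat /= andbT. Qed.

Lemma split2 m x : (x < 2 ^ m.+2)%N ->
  (x < 2 ^ m.+1)%N \/ exists2 x', x = 2 ^ m.+1 + x' & (x' < 2 ^ m.+1)%N.
Proof.
move=> h; case: (ltnP x (2 ^ m.+1)) => hx; first by left.
right; exists (x - 2 ^ m.+1); first by rewrite subnKC.
by rewrite ltn_subLR // addnn -mul2n -expnS.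
Qed.

Lemma Mentry_cov m i j : (i < 2 ^ m.+1)%N -> (j < 2 ^ m.+1)%N ->
  Mentry m i j = cov m.+1 i j.
Proof.
elim: m i j => [|m IH] i j hi hj.
  rewrite /cov /= /bit !expn0 !divn1 !andbT.
  by move: hi hj; case: i => [|[|i]] //; case: j => [|[|j]].
have hh : (2 ^ m.+1 <= 2 ^ m.+2)%N by rewrite leq_exp2l.
have nlt x : (2 ^ m.+1 + x < 2 ^ m.+1)%N = false by rewrite ltnNge leq_addr.
case: (@split2 m i hi) => [hi'|[i' -> hi']]; case: (@split2 m j hj) => [hj'|[j' -> hj']];
  rewrite /= ?nlt ?hi' ?hj' ?addKn covS ?cov_lo ?cov_lo'
    ?bit_hi2 ?orbT ?(bit_hi hi') ?(bit_hi hj') ?andbF ?andbT ?orbT ?IH //.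
Qed.

Lemma bit_inj n i j : (i < 2 ^ n)%N -> (j < 2 ^ n)%N ->
  (forall l, (l < n)%N -> bit i l = bit j l) -> i = j.
Proof.
elim: n i j => [|n IH] i j hi hj hb.
  by clear hb; move: hi hj; rewrite expn0; case: i; case: j.
have h0 := hb 0 isT; rewrite /bit expn0 !divn1 in h0.
have e : i %/ 2 = j %/ 2.
  apply: IH.
  - by rewrite ltn_divLR // -expnSr.
  - by rewrite ltn_divLR // -expnSr.
  move=> l hl; have := hb l.+1 hl; by rewrite /bit expnS !divnMA.
rewrite -(odd_double_half i) -(odd_double_half j) -!divn2.
by rewrite h0 e.
Qed.
Import Order.Theory.
Local Open Scope order_scope.

Section Lat.
Variables (d : Order.disp_t) (B : finCTBDistrLatticeType d).

Definition atom (a : B) : bool :=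
  (a != \bot) && [forall b : B, (b <= a) ==> ((b == \bot) || (b == a))].

Definition below (x : B) := [pred b : B | b < x].

Lemma atom_below (x : B) : x != \bot -> exists2 a, atom a & a <= x.
Proof.
have [n hn] : exists n, (#|below x| <= n)%N by eexists.
elim: n x hn => [|n IH] x hn hx.
  case hat: (atom x); first by exists x.
  move: hat; rewrite /atom hx /=; move/negbT/forallPn => [b].
  rewrite negb_imply negb_or => /andP[hb /andP[hb0 hbx]].
  have hbin : b \in below x by rewrite inE lt_neqAle hbx hb.
  have : (0 < #|below x|)%N by apply/card_gt0P; exists b.
  by rewrite lt0n -leqn0 hn.
case hat: (atom x); first by exists x.
move: hat; rewrite /atom hx /=; move/negbT/forallPn => [b].
rewrite negb_imply negb_or => /andP[hb /andP[hb0 hbx]].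
have hbx' : b < x by rewrite lt_neqAle hbx hb.
have hp : below b \proper below x.
  apply/properP; split.
    by apply/subsetP => c; rewrite !inE => /lt_trans; apply.
  by exists b; rewrite !inE ?ltxx.
have [a ha hab] := IH b (leq_trans (proper_card hp) hn) hb0.
by exists a => //; apply: le_trans hab hb.
Qed.

Lemma atom_meet (a b : B) : atom a -> atom b -> a != b -> a `&` b = \bot.
Proof.
move=> /andP[ha0 /forallP ha] /andP[hb0 /forallP hb] hab.
have := ha (a `&` b); rewrite leIl /= => /orP[/eqP //|/eqP e].
have hab' : a <= b by apply/meet_idPl.
have := hb a; rewrite hab' /= => /orP[/eqP a0|/eqP ab].
  by move: ha0; rewrite a0 eqxx.
by move: hab; rewrite ab eqxx.
Qed.

Lemma atoms_enum : exists N (e : 'I_N -> B),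
  [/\ forall i, atom (e i), injective e & forall a, atom a -> exists i, e i = a].
Proof.
pose A := [set a : B | atom a].
exists #|A|, (@enum_val _ (mem A)); split.
- by move=> i; have := enum_valP i; rewrite inE.
- exact: enum_val_inj.
- move=> a ha; have hA : a \in A by rewrite inE.
  by exists (enum_rank_in hA a); rewrite enum_rankK_in.
Qed.

Variables (N : nat) (e : 'I_N -> B).
Hypotheses (He : forall i, atom (e i)) (einj : injective e)
  (esurj : forall a, atom a -> exists i, e i = a).

Definition psi (S : {set 'I_N}) : B := \join_(i in S) e i.

Lemma e_le_psi i S : (e i <= psi S) = (i \in S).
Proof.
apply/idP/idP; last by move=> hi; apply: joins_sup.
move=> hle; apply/negPn/negP => hiS.
have : e i = \bot.
  rewrite -(meet_l hle) /psi.
  apply: (big_ind (fun y => e i `&` y = \bot)).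
  - exact: meetx0.
  - by move=> y z hy hz; rewrite meetUr hy hz joinx0.
  move=> j hj; apply: atom_meet => //; apply/negP => /eqP/einj ej.
  by move: hiS; rewrite ej hj.
by move/eqP; move: (He i) => /andP[/negPf ->].
Qed.

Lemma cover x : x = psi [set i | e i <= x].
Proof.
apply/le_anti/andP; split; last first.
  by apply/joinsP => i; rewrite inE.
rewrite -diff_eq0; apply/negPn/negP => hz.
have [a ha haz] := atom_below hz.
have [i ei] := esurj ha.
have hax : a <= x by apply: le_trans haz (leBx _ _).
have hai : a <= psi [set i | e i <= x] by rewrite -ei e_le_psi inE ei.
have : a <= \bot.
  by rewrite -(diffKI x (psi [set i | e i <= x])) lexI hai.
rewrite le_eqVlt ltx0 orbF => /eqP a0.
by move: ha; rewrite /atom a0 eqxx.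
Qed.

Lemma psi_inj : injective psi.
Proof.
move=> S T h; apply/setP => i; by rewrite -!e_le_psi h.
Qed.

Lemma psi_bij : bijective psi.
Proof.
exists (fun x => [set i | e i <= x]).
- by move=> S; apply/setP => i; rewrite inE e_le_psi.
- by move=> x; rewrite -cover.
Qed.

Lemma card_B : #|B| = (2 ^ N)%N.
Proof.
rewrite -(bij_eq_card psi_bij) -cardsT -powersetT card_powerset cardsT card_ord.
done.
Qed.

Lemma psi_top : psi setT = \top.
Proof.
apply/le_anti; rewrite lex1 /=.
rewrite {1}(cover \top); apply: le_joins; exact: subsetT.
Qed.

Lemma psi_U S T : psi (S :|: T) = psi S `|` psi T.
Proof. exact: joins_setU. Qed.

End Lat.

Lemma compl_le d (B : finCTBDistrLatticeType d) (x y : B) :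
  y `|` ~` x = \top -> x <= y.
Proof.
move=> h; have : x `&` (y `|` ~` x) = x `&` y by rewrite meetUr meetxC joinx0.
by rewrite h meetx1 => ->; apply: leIr.
Qed.

Close Scope order_scope.
Unset Implicit Arguments.

Theorem theorem4p4 (d : Order.disp_t) (B : finCTBDistrLatticeType d) (k : nat)
  (hk : (1 <= k)%N) (hcard : #|B| = (2 ^ k.+1)%N) :
  (exists alpha : 'I_(2 ^ k.+1) -> B,
      bijective alpha /\ code_matrix alpha = Mmat k) /\
  (exists (star : code k -> code k -> code k) (f : code k -> B),
      bijective f /\ forall w w' : code k, f (star w w') = mv_oplus (f w) (f w')).
Proof.
have [N [e [He einj esurj]]] := atoms_enum B.
have hN : N = k.+1.
  by apply: (@expnI 2) => //; rewrite -(card_B He einj esurj) hcard.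
subst N.
pose bits (i : 'I_(2 ^ k.+1)) : {set 'I_k.+1} := [set l : 'I_k.+1 | bit i l].
pose alpha i := psi e (bits i).
have Hcm : code_matrix alpha = Mmat k.
  apply/matrixP => i j; rewrite !mxE /mv_oplus /mv_eps /alpha.
  rewrite -psi_U -(psi_top He einj esurj) (inj_eq (psi_inj He einj)).
  rewrite Mentry_cov ?ltn_ord //.
  apply/eqP/allP => [H l|H].
    rewrite mem_iota add0n => hl.
    have : Ordinal hl \in (bits i :|: bits j) by rewrite H inE.
    by rewrite in_setU !inE.
  apply/setP => l; rewrite in_setU !inE.
  by apply: H; rewrite mem_iota add0n ltn_ord.
have alpha_inj : injective alpha.
  move=> i j /(psi_inj He einj) hb; apply: val_inj.
  apply: (@bit_inj k.+1); rewrite ?ltn_ord // => l hl.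
  by have := congr1 (fun S : {set 'I_k.+1} => Ordinal hl \in S) hb; rewrite /= !inE.
have alpha_bij : bijective alpha.
  by apply: (inj_card_bij alpha_inj); rewrite card_ord hcard.
split; first by exists alpha.
have [ainv aK Ka] := alpha_bij.
have row_inj : forall i j, row i (Mmat k) = row j (Mmat k) -> i = j.
  have half : forall i j, row i (Mmat k) = row j (Mmat k) ->
      (alpha i <= alpha j)%O.
    move=> i j H; apply: compl_le.
    have := congr1 (fun r : 'rV[bool]_(2 ^ k.+1) => r ord0 (ainv (~` alpha i))%O) H.
    rewrite -Hcm !mxE /mv_oplus /mv_eps Ka joinxC eqxx => /esym/eqP.
    done.
  move=> i j H; apply: alpha_inj; apply/le_anti/andP; split.
  - exact: half.
  - exact: half.
pose i_of (w : code k) : 'I_(2 ^ k.+1) := xchoose (existsP (valP w)).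
have i_ofP : forall w, val w = row (i_of w) (Mmat k).
  by move=> w; apply/eqP; exact: (xchooseP (existsP (valP w))).
have gP : forall i, is_codeword (row i (Mmat k)).
  by move=> i; apply/existsP; exists i.
pose g i : code k := exist _ (row i (Mmat k)) (gP i).
pose f w := alpha (i_of w).
pose h b := g (ainv b).
have fK : cancel f h.
  move=> w; apply: val_inj; rewrite /h /f aK /= -i_ofP //.
have hK : cancel h f.
  move=> b; rewrite /f /h; have := i_ofP (g (ainv b)); rewrite /= => /row_inj <-.
  by rewrite Ka.
exists (fun w w' => h (mv_oplus (f w) (f w'))), f; split.
  by exists h.
by move=> w w'; rewrite hK.
Qed.
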